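(* Let $1\le k<n$ and $A\in\mathbb{H}_n$. The following are equivalent: (a) $A=\gamma I$ for some $\gamma\in\mathbb{R}$; (b) $A\parallel B$ for every $B\in\mathbb{H}_n$; (c) $A\parallel P$ for every rank-$k$ orthogonal projection $P\in\mathbb{H}_n$.
   Context: $\mathbb{H}_n$ is the real space of $n\times n$ Hermitian matrices. $w_k(A)=\max\{|\operatorname{tr}(AP)|: P=P^*=P^2,\operatorname{tr}P=k\}$. For $A,B\in\mathbb{H}_n$, $A\parallel B$ means $w_k(A+\mu B)=w_k(A)+w_k(B)$ for some $\mu\in\{1,-1\}$. *)

(* Defs.v *)
From HB Require Import structures.
From mathcomp Require Import all_boot all_order all_algebra.
From mathcomp Require Import complex.
From mathcomp Require Import boolp classical_sets reals.
Set Implicit Arguments. Unset Strict Implicit. Unset Printing Implicit Defensive.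
Import Order.TTheory GRing.Theory Num.Theory.
Local Open Scope ring_scope.
Local Open Scope classical_set_scope.

Definition rC (R : realType) (x : R) : R[i] := (x%:C)%C.

Definition adjmx (R : realType) (n : nat) (A : 'M[R[i]]_n) : 'M[R[i]]_n :=
  (map_mx Num.conj A)^T.

Definition herm_mx (R : realType) (n : nat) (A : 'M[R[i]]_n) : Prop :=
  adjmx A = A.

Definition trk_proj (R : realType) (n k : nat) (P : 'M[R[i]]_n) : Prop :=
  [/\ adjmx P = P, P *m P = P & \tr P = k%:R].

(* w_k(A) = max { |tr(AP)| : P = P^* = P^2, tr P = k }, written as a supremum
   (the maximum is attained by compactness, so max = sup). *)
Definition wk (R : realType) (n k : nat) (A : 'M[R[i]]_n) : R :=
  sup [set x : R | exists P : 'M[R[i]]_n,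
         trk_proj k P /\ x = ComplexField.Normc.normc (\tr (A *m P))].

Definition kparallel (R : realType) (n k : nat) (A B : 'M[R[i]]_n) : Prop :=
  exists mu : R, (mu = 1 \/ mu = -1) /\
    wk k (A + rC mu *: B) = wk k A + wk k B.

Definition rank_proj (R : realType) (n k : nat) (P : 'M[R[i]]_n) : Prop :=
  [/\ adjmx P = P, P *m P = P & \rank P = k].

(* Main.v *)
Require Import Defs.
From HB Require Import structures.
From mathcomp Require Import all_boot all_order all_algebra.
From mathcomp Require Import complex.
From mathcomp Require Import boolp classical_sets reals.
From mathcomp Require Import spectral sesquilinear.
From mathcomp Require Import ring lra.
Set Implicit Arguments. Unset Strict Implicit. Unset Printing Implicit Defensive.
Import Order.TTheory GRing.Theory Num.Theory.
Local Open Scope ring_scope.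
Local Open Scope sesquilinear_scope.

Section Basic.
Variable R : realType.
Local Notation C := R[i].
Local Notation nc := (@ComplexField.Normc.normc R).

Lemma normCE (x : C) : `|x| = ((nc x)%:C)%C.
Proof. by case: x => a b; rewrite normc_def. Qed.

Lemma nc_ge0 (x : C) : 0 <= nc x.
Proof. by rewrite -(@ler0c R) -normCE. Qed.

Lemma nc_real (t : R) : nc (t%:C)%C = `|t|.
Proof.
by rewrite /ComplexField.Normc.normc /= expr0n /= addr0 sqrtr_sqr.
Qed.

Variable n : nat.
Implicit Types A B : 'M[C]_n.

Lemma adjE A : adjmx A = A ^t*.
Proof. by rewrite /adjmx map_trmx. Qed.

Lemma adjK A : adjmx (adjmx A) = A.
Proof. by rewrite !adjE trmxCK. Qed.

Lemma adjM A B : adjmx (A *m B) = adjmx B *m adjmx A.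
Proof. by rewrite /adjmx map_mxM trmx_mul. Qed.

Lemma adjD A B : adjmx (A + B) = adjmx A + adjmx B.
Proof. by rewrite /adjmx map_mxD linearD. Qed.

Lemma adjN A : adjmx (- A) = - adjmx A.
Proof. by rewrite /adjmx map_mxN linearN. Qed.

Lemma adjB A B : adjmx (A - B) = adjmx A - adjmx B.
Proof. by rewrite adjD adjN. Qed.

Lemma adjZ (a : C) A : adjmx (a *: A) = (Num.conj a) *: adjmx A.
Proof. by rewrite /adjmx map_mxZ linearZ. Qed.

Lemma adjS (a : C) : adjmx (a%:M : 'M[C]_n) = (Num.conj a)%:M.
Proof. by rewrite /adjmx map_scalar_mx tr_scalar_mx. Qed.

Lemma tr_adj A : \tr (adjmx A) = Num.conj (\tr A).
Proof. by rewrite /adjmx mxtrace_tr trace_map_mx. Qed.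

Definition froR (A : 'M[C]_n) : R := \sum_i \sum_j nc (A i j) ^+ 2.

Lemma tr_fro A : \tr (A *m adjmx A) = ((froR A)%:C)%C.
Proof.
rewrite /mxtrace /froR rmorph_sum; apply: eq_bigr => i _.
rewrite !mxE rmorph_sum; apply: eq_bigr => j _.
by rewrite !mxE rmorphXn /= -normCE sqr_normc.
Qed.

Lemma fro_ge0 A : 0 <= froR A.
Proof. by apply: sumr_ge0 => i _; apply: sumr_ge0 => j _; apply: sqr_ge0. Qed.

Lemma fro_entry A i j : nc (A i j) ^+ 2 <= froR A.
Proof.
rewrite /froR (bigD1 i) //= (bigD1 j) //= -addrA lerDl.
apply: addr_ge0; first by apply: sumr_ge0 => ? _; apply: sqr_ge0.
by apply: sumr_ge0 => ? _; apply: sumr_ge0 => ? _; apply: sqr_ge0.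
Qed.

End Basic.

Section Proj.
Variable R : realType.
Local Notation C := R[i].
Local Notation nc := (@ComplexField.Normc.normc R).
Variable n : nat.
Implicit Types A B M D P Q E F : 'M[C]_n.

Definition hp P := adjmx P = P /\ P *m P = P.

Lemma hp_compl P : hp P -> hp (1%:M - P).
Proof.
case=> aP iP; split; first by rewrite adjB adjS conjC1 aP.
by rewrite mulmxBl mul1mx mulmxBr mulmx1 iP subrr subr0.
Qed.

Lemma tr_EF E F : hp E -> hp F -> \tr (E *m F) = ((froR (F *m E))%:C)%C.
Proof.
case=> aE iE [aF iF]; rewrite -tr_fro adjM aE aF.
rewrite (mulmxA (F *m E) E F) -(mulmxA F E E) iE (mxtrace_mulC (F *m E) F) (mulmxA F F E) iF.
by rewrite mxtrace_mulC.
Qed.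

Lemma nc_sum (I : finType) (G : I -> C) :
  nc (\sum_i G i) <= \sum_i nc (G i).
Proof.
elim/big_rec2: _ => [|i y x _ IH]; first by rewrite ComplexField.Normc.normc0.
by apply: le_trans (le_normcD _ _) _; rewrite lerD2l.
Qed.

Definition Ksum M : R := \sum_i \sum_j nc (M i j).

Lemma tr_bound M D (eta : R) : (forall i j, nc (D i j) <= eta) ->
  nc (\tr (M *m D)) <= Ksum M * eta.
Proof.
move=> hD; rewrite /mxtrace /Ksum mulr_suml.
apply: le_trans (nc_sum _) _; apply: ler_sum => i _.
rewrite mxE mulr_suml; apply: le_trans (nc_sum _) _; apply: ler_sum => j _.
by rewrite ComplexField.Normc.normcM ler_wpM2l ?nc_ge0.
Qed.

Lemma trk_hp k P : trk_proj k P -> hp P.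
Proof. by case. Qed.

Lemma fro_trk k P : trk_proj k P -> froR P = k%:R.
Proof.
case=> aP iP tP; apply: (@complexI R); rewrite -tr_fro aP iP tP.
by rewrite rmorph_nat.
Qed.

Lemma trk_entry k P i j : (1 <= k)%N -> trk_proj k P -> nc (P i j) <= k%:R.
Proof.
move=> k1 hP; have := fro_entry P i j; rewrite (fro_trk hP).
have : (1 <= k%:R :> R) by rewrite ler1n.
have := nc_ge0 (P i j); set x := nc _; set y : R := k%:R => ? ? ?.
nra.
Qed.

Lemma trPQ k P Q : trk_proj k P -> trk_proj k Q ->
  exists r : R, \tr (P *m Q) = (r%:C)%C /\ 0 <= r <= k%:R.
Proof.
move=> hP hQ; exists (froR (Q *m P)); split.
  by rewrite tr_EF //; [exact: trk_hp hP | exact: trk_hp hQ].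
rewrite fro_ge0 /=.
have hPQ : \tr (P *m Q) = ((froR (Q *m P))%:C)%C.
  by rewrite tr_EF //; [exact: trk_hp hP | exact: trk_hp hQ].
have := tr_EF (hp_compl (trk_hp hP)) (trk_hp hQ).
rewrite mulmxBl mul1mx raddfB /= hPQ.
case: hQ => _ _ -> h.
have : ((k%:R - froR (Q *m P))%:C)%C = ((froR (Q *m (1%:M - P)))%:C)%C :> C.
  by rewrite rmorphB rmorph_nat.
by move/complexI => e; rewrite -subr_ge0 e fro_ge0.
Qed.

Lemma fro_diff k P Q r : trk_proj k P -> trk_proj k Q ->
  \tr (P *m Q) = (r%:C)%C -> froR (P - Q) = 2 * k%:R - 2 * r.
Proof.
move=> [aP iP tP] [aQ iQ tQ] hr; apply: (@complexI R); rewrite -tr_fro adjB aP aQ.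
rewrite mulmxBl !mulmxBr iP iQ !raddfB /= tP tQ (mxtrace_mulC Q P) hr.
rewrite !rmorphM /= !rmorph_nat; ring.
Qed.

End Proj.

Lemma tr_pid (F : nzRingType) n k : (k <= n)%N -> \tr (pid_mx k : 'M[F]_n) = k%:R.
Proof.
move=> kn; rewrite /mxtrace (eq_bigr (fun i : 'I_n => ((i < k)%N)%:R)) => [|i _]; last by rewrite mxE eqxx.
rewrite -(big_mkord xpredT (fun i => ((i<k)%N)%:R)) (big_cat_nat (leq0n k) kn) /=.
rewrite [X in _ + X]big1_seq ?addr0; last first.
  move=> i /andP[_]; rewrite mem_index_iota => /andP[ki _]; by rewrite ltnNge ki.
rewrite (eq_big_seq (fun _ => 1)); last first.
  by move=> i; rewrite mem_index_iota => /andP[_ ->].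
by rewrite sumr_const_nat subn0.
Qed.

Lemma sup_eq (R : realType) (E : set R) (c : R) :
  (exists x, E x) -> (forall x, E x -> x <= c) ->
  (forall eps, 0 < eps -> exists2 x, E x & c - eps < x) -> sup E = c.
Proof.
move=> [x0 Ex0] ub adh.
have hs : has_sup E by split; [exists x0 | exists c => y /ub].
apply/le_anti/andP; split; first by apply: ge_sup; [exists x0 | move=> y /ub].
apply/ler_addgt0Pr => e e0; have [x Ex lt] := adh e e0.
have := sup_upper_bound hs Ex; move: lt; set s := sup E => ? ?; lra.
Qed.

Section Wk.
Variable R : realType.
Local Notation C := R[i].
Local Notation nc := (@ComplexField.Normc.normc R).
Variables n k : nat.
Hypothesis k1 : (1 <= k)%N.
Hypothesis kn : (k <= n)%N.
Implicit Types A B M D P Q E F : 'M[C]_n.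

Local Open Scope classical_set_scope.
Definition wset M := [set x : R | exists P : 'M[C]_n,
         trk_proj k P /\ x = nc (\tr (M *m P))].

Lemma wkE M : wk k M = sup (wset M). Proof. by []. Qed.

Lemma pid_trk : trk_proj k (pid_mx k : 'M[C]_n).
Proof.
split; last by rewrite tr_pid.
  by rewrite /adjmx (map_pid_mx (Num.conj_op : {rmorphism C -> C})) tr_pid_mx.
by rewrite pid_mx_id.
Qed.

Lemma wset_has_sup M : has_sup (wset M).
Proof.
split; first by exists (nc (\tr (M *m pid_mx k))), (pid_mx k); split => //; exact: pid_trk.
exists (Ksum M * k%:R) => x [Q [hQ ->]].
by apply: tr_bound => i j; apply: trk_entry.
Qed.

Lemma wk_ub M Q : trk_proj k Q -> nc (\tr (M *m Q)) <= wk k M.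
Proof. by move=> hQ; apply: (sup_upper_bound (wset_has_sup M)); exists Q. Qed.

Lemma wk_adh M eps : 0 < eps ->
  exists Q, trk_proj k Q /\ wk k M - eps < nc (\tr (M *m Q)).
Proof.
move=> e0; have [x [Q [hQ ->]] lt] := sup_adherent e0 (wset_has_sup M).
by exists Q.
Qed.

Lemma wk_char M c : (forall Q, trk_proj k Q -> nc (\tr (M *m Q)) <= c) ->
  (forall eps, 0 < eps -> exists Q, trk_proj k Q /\ c - eps < nc (\tr (M *m Q))) ->
  wk k M = c.
Proof.
move=> ub adh; apply: sup_eq.
- by exists (nc (\tr (M *m pid_mx k))), (pid_mx k); split => //; exact: pid_trk.
- by move=> x [Q [hQ ->]]; apply: ub.
- by move=> e e0; have [Q [hQ lt]] := adh e e0; exists (nc (\tr (M *m Q))) => //; exists Q.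
Qed.

Lemma wk_ge0 M : 0 <= wk k M.
Proof. by apply: le_trans (wk_ub M pid_trk); apply: nc_ge0. Qed.

End Wk.


Section AtoB.
Variable R : realType.
Local Notation C := R[i].
Local Notation nc := (@ComplexField.Normc.normc R).
Variables n k : nat.
Hypothesis k1 : (1 <= k)%N.
Hypothesis kn : (k <= n)%N.
Implicit Types A B M D P Q E F : 'M[C]_n.

Lemma conj_fix (x : C) : Num.conj x = x -> x = ((complex.Re x)%:C)%C.
Proof.
case: x => a b /= h; have : (- b = b) by case: h.
move=> e; have -> : b = 0 by lra.
by [].
Qed.

Lemma tr_herm M Q : herm_mx M -> adjmx Q = Q ->
  \tr (M *m Q) = ((complex.Re (\tr (M *m Q)))%:C)%C.
Proof.
move=> hM aQ; apply: conj_fix; rewrite -tr_adj adjM aQ hM.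
exact: mxtrace_mulC.
Qed.

Definition tB B Q : R := complex.Re (\tr (B *m Q)).

Lemma nc_tB B Q : herm_mx B -> adjmx Q = Q -> nc (\tr (B *m Q)) = `|tB B Q|.
Proof. by move=> hB aQ; rewrite (tr_herm hB aQ) nc_real. Qed.

Lemma tr_scal_plus (g mu : R) B Q : herm_mx B -> trk_proj k Q ->
  \tr (((rC g)%:M + rC mu *: B) *m Q) = ((g * k%:R + mu * tB B Q)%:C)%C.
Proof.
move=> hB [aQ iQ tQ]; rewrite mulmxDl mul_scalar_mx -scalemxAl raddfD /= !mxtraceZ tQ.
rewrite (tr_herm hB aQ) rmorphD !rmorphM /= rmorph_nat /tB /rC.
by [].
Qed.

Lemma sign_choice B : herm_mx B ->
  exists s : R, (s = 1 \/ s = -1) /\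
  forall eps, 0 < eps -> exists Q, trk_proj k Q /\ wk k B - eps < s * tB B Q.
Proof.
move=> hB; set W := wk k B.
have ub Q : trk_proj k Q -> `|tB B Q| <= W.
  by move=> hQ; rewrite -nc_tB //; [exact: wk_ub | case: hQ].
case: (pselect (forall eps, 0 < eps -> exists Q, trk_proj k Q /\ W - eps < tB B Q)) => [h|h].
  by exists 1; split; [left | move=> e e0; have [Q [hQ lt]] := h e e0; exists Q; rewrite mul1r].
exists (-1); split; first by right.
move/existsNP: h => [e0 /not_implyP [e0p h]].
move=> e ep; set e' := Num.min e e0.
have e'p : 0 < e' by rewrite lt_min ep e0p.
have [Q [hQ lt]] := wk_adh k1 kn B e'p.
exists Q; split => //.
have nQ : ~ (W - e0 < tB B Q) by move=> l; apply: h; exists Q.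
move: lt; rewrite -/W nc_tB //; last by case: hQ.
have : e' <= e by rewrite ge_min lexx.
have : e' <= e0 by rewrite ge_min lexx orbT.
move/negP: nQ; rewrite -leNgt => nQ.
case: (ler0P (tB B Q)) => [t0|t0] a1 a2 a3; lra.
Qed.

Lemma a_to_b (g : R) B : herm_mx B -> kparallel k (rC g)%:M B.
Proof.
move=> hB; have [s [hs adh]] := sign_choice hB.
set W := wk k B.
have ub Q : trk_proj k Q -> `|tB B Q| <= W.
  by move=> hQ; rewrite -nc_tB //; [exact: wk_ub | case: hQ].
have hk : (0 <= k%:R :> R) by rewrite ler0n.
have wA : wk k ((rC g)%:M : 'M[C]_n) = `|g| * k%:R.
  have e : ((rC g)%:M : 'M[C]_n) = (rC g)%:M + rC 0 *: B.
    by rewrite /rC rmorph0 scale0r addr0.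
  apply: (wk_char kn) => [Q hQ|e0 e0p].
    by rewrite e tr_scal_plus // mul0r addr0 nc_real normrM (ger0_norm hk).
  exists (pid_mx k); split; first exact: (pid_trk R kn).
  rewrite e tr_scal_plus //; last exact: (pid_trk R kn).
  by rewrite mul0r addr0 nc_real normrM (ger0_norm hk); lra.
set sg : R := if 0 <= g then 1 else -1.
have sgg : sg * g = `|g| by rewrite /sg; case: (lerP 0 g) => h; [rewrite ger0_norm // mul1r | rewrite ltr0_norm // mulN1r].
have sg2 : sg * sg = 1 by rewrite /sg; case: (0 <= g); lra.
exists (s * sg); split.
  by case: hs => ->; rewrite /sg; case: (0 <= g); [left; lra | right; lra | right; lra | left; lra].
rewrite wA; apply: (wk_char kn) => //.
  move=> Q hQ; rewrite tr_scal_plus // nc_real.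
  have := ub Q hQ; have hs1 : `|s * sg| = 1.
    by case: hs => ->; rewrite /sg; case: (0 <= g); rewrite ?mul1r ?mulN1r ?normrN normr1.
  move=> u; apply: le_trans (ler_normD _ _) _; rewrite normrM (ger0_norm hk) normrM hs1 mul1r.
  by rewrite lerD2l.
move=> e e0; have [Q [hQ lt]] := adh e e0; exists Q; split => //.
rewrite tr_scal_plus // nc_real.
have : sg * (g * k%:R + s * sg * tB B Q) <= `|g * k%:R + s * sg * tB B Q|.
  have h1 : `|sg| = 1 by rewrite /sg; case: (0 <= g); rewrite ?normrN normr1.
  by apply: le_trans (ler_norm _) _; rewrite normrM h1 mul1r.
have -> : sg * (g * k%:R + s * sg * tB B Q) = `|g| * k%:R + s * tB B Q.
  by rewrite mulrDr mulrA sgg !mulrA (mulrC sg s) -(mulrA s sg sg) sg2 mulr1.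
lra.
Qed.


End AtoB.

Section Close.
Variable R : realType.
Local Notation C := R[i].
Local Notation nc := (@ComplexField.Normc.normc R).
Variables n k : nat.
Hypothesis k1 : (1 <= k)%N.
Hypothesis kn : (k <= n)%N.
Implicit Types A B M D P Q E F : 'M[C]_n.

Lemma wk_proj P : trk_proj k P -> wk k P = k%:R.
Proof.
move=> hP; apply: (wk_char kn) => [Q hQ|e e0].
  have [r [-> /andP[r0 rk]]] := trPQ hP hQ.
  by rewrite nc_real ger0_norm.
exists P; split => //; case: (hP) => _ iP tP; rewrite iP tP.
have -> : (k%:R : C) = ((k%:R : R)%:C)%C by rewrite rmorph_nat.
by rewrite nc_real ger0_norm ?ler0n //; lra.
Qed.

Lemma key_close A P : herm_mx A -> trk_proj k P -> kparallel k A P ->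
  nc (\tr (A *m P)) = wk k A.
Proof.
move=> hA hP [mu [hmu]]; rewrite (wk_proj hP) => hw.
apply/le_anti/andP; split; first exact: wk_ub.
rewrite leNgt; apply/negP => lt.
set a := nc (\tr (A *m P)).
set d := (wk k A) - a.
have d0 : 0 < d by rewrite subr_gt0.
set K := Ksum A.
have K0 : 0 <= K by apply: sumr_ge0 => i _; apply: sumr_ge0 => j _; apply: nc_ge0.
set eta := d / (2 * (K + 1)).
have eta0 : 0 < eta by apply: divr_gt0 => //; lra.
have etaK : (K + 1) * eta = d / 2.
  rewrite /eta; field; lra.
set e := Num.min (d / 2) (eta ^+ 2 / 2).
have e0 : 0 < e by rewrite lt_min; apply/andP; split; [lra | apply: divr_gt0 => //; apply: exprn_gt0].
have e1 : e <= d / 2 by rewrite ge_min lexx.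
have e2 : e <= eta ^+ 2 / 2 by rewrite ge_min lexx orbT.
have [Q [hQ ltQ]] := wk_adh k1 kn (A + rC mu *: P) e0.
move: ltQ; rewrite hw.
have [r [trr /andP[r0 rk]]] := trPQ hP hQ.
have eqt : \tr ((A + rC mu *: P) *m Q) = \tr (A *m Q) + ((mu * r)%:C)%C.
  by rewrite mulmxDl -scalemxAl raddfD /= mxtraceZ trr /rC rmorphM.
rewrite eqt => ltQ.
have le1 : nc (\tr (A *m Q) + ((mu * r)%:C)%C) <= nc (\tr (A *m Q)) + r.
  apply: le_trans (le_normcD _ _) _; rewrite nc_real normrM (ger0_norm r0).
  by case: hmu => ->; rewrite ?normrN normr1 mul1r.
have ubQ : nc (\tr (A *m Q)) <= (wk k A) by exact: wk_ub.
have hr : k%:R - e < r by lra.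
have hAQ : (wk k A) - e < nc (\tr (A *m Q)) by lra.
have trQP : \tr (Q *m P) = ((r%:C)%C) by rewrite mxtrace_mulC.
have fro := fro_diff hQ hP trQP.
have ent i j : nc ((Q - P) i j) <= eta.
  have := fro_entry (Q - P) i j; rewrite fro.
  have := nc_ge0 ((Q - P) i j); set x := nc _ => x0 hx.
  have : x ^+ 2 < eta ^+ 2 by lra.
  move=> h; rewrite leNgt; apply/negP => h2.
  have : eta ^+ 2 < x ^+ 2 by rewrite ltr_pXn2r // ?nnegrE; lra.
  lra.
have := tr_bound A ent; rewrite -/K.
have -> : A *m (Q - P) = A *m Q - A *m P by rewrite mulmxBr.
rewrite raddfB /= => hb.
have : nc (\tr (A *m Q)) <= a + K * eta.
  have -> : \tr (A *m Q) = \tr (A *m P) + (\tr (A *m Q) - \tr (A *m P)) by rewrite addrC subrK.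
  by apply: le_trans (le_normcD _ _) _; rewrite lerD2l.
have : K * eta <= d / 2 by rewrite -etaK; nra.
rewrite /d in e1 etaK *; lra.
Qed.

End Close.

Section Unit.
Variable R : realType.
Local Notation C := R[i].
Local Notation nc := (@ComplexField.Normc.normc R).
Variables n k : nat.
Hypothesis kn : (k <= n)%N.
Implicit Types A B M D P Q E F U V G : 'M[C]_n.

Definition unit_ok U := U *m adjmx U = 1%:M.

Lemma unit_okE U : unit_ok U <-> U \is unitarymx.
Proof. by rewrite /unit_ok adjE; split => [h|/unitarymxP //]; apply/unitarymxP. Qed.

Lemma unit_ok_l U : unit_ok U -> adjmx U *m U = 1%:M.
Proof.
move=> /unit_okE hU; rewrite adjE -invmx_unitary //; apply: mulVmx.
exact: unitarymx_unit.
Qed.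

Lemma adj_pid : adjmx (pid_mx k : 'M[C]_n) = pid_mx k.
Proof. by rewrite /adjmx (map_pid_mx (Num.conj_op : {rmorphism C -> C})) tr_pid_mx. Qed.

Definition PU U : 'M[C]_n := adjmx U *m pid_mx k *m U.

Lemma PU_trk U : unit_ok U -> trk_proj k (PU U).
Proof.
move=> hU; split.
- by rewrite /PU !adjM adjK adj_pid mulmxA.
- rewrite /PU -!mulmxA (mulmxA U) (mulmxA (U *m adjmx U)) hU mul1mx.
  by rewrite (mulmxA (pid_mx k)) pid_mx_id.
- by rewrite /PU mxtrace_mulC mulmxA hU mul1mx tr_pid.
Qed.

Lemma PU_rank U : unit_ok U -> rank_proj k (PU U).
Proof.
move=> hU; have [a i _] := PU_trk hU; split => //.
have uU : U \in unitmx by apply: unitarymx_unit; apply/unit_okE.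
have uA : adjmx U \in unitmx.
  by rewrite adjE -invmx_unitary ?unitmx_inv //; apply/unit_okE.
rewrite /PU mxrankMfree ?row_free_unit //.
have uA' : (adjmx U)^T \in unitmx by rewrite unitmx_tr.
rewrite -mxrank_tr trmx_mul mxrankMfree; last by rewrite row_free_unit.
by rewrite mxrank_tr rank_pid_mx.
Qed.

Lemma unit_mul U V : unit_ok U -> unit_ok V -> unit_ok (U *m V).
Proof.
move=> hU hV; rewrite /unit_ok adjM mulmxA -(mulmxA U) hV mulmx1 //.
Qed.

End Unit.

Lemma adj_entry (R : realType) n (M : 'M[R[i]]_n) i j : (adjmx M) i j = Num.conj (M j i).
Proof. by rewrite /adjmx !mxE. Qed.

Lemma sum_delta (R : nzRingType) n (f : 'I_n -> R) (a : 'I_n) :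
  \sum_z ((z == a)%:R * f z) = f a.
Proof.
rewrite (bigD1 a) //= eqxx mul1r big1 ?addr0 // => z /negPf ->; by rewrite mul0r.
Qed.

Section Rot.
Variable R : realType.
Local Notation C := R[i].
Variables (n : nat) (a b : 'I_n) (c s : R).
Hypothesis hab : a != b.
Hypothesis cs : c ^+ 2 + s ^+ 2 = 1.
Local Notation gc := (rC c).
Local Notation gs := (rC s).

Definition Gmx : 'M[C]_n := \matrix_(x, y) (if x == y then (if (x == a) || (x == b) then gc else 1)
  else if (x == a) && (y == b) then gs else if (x == b) && (y == a) then - gs else 0).

Lemma hba : b != a. Proof. by rewrite eq_sym. Qed.

Lemma Grow_a z : Gmx a z = gc * (z == a)%:R + gs * (z == b)%:R.
Proof.
rewrite mxE; have [->|za] := eqVneq z a.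
  by rewrite !eqxx (negPf hab) /= mulr1 mulr0 addr0.
have az : a != z by rewrite eq_sym.
rewrite eqxx /= andbF.
by case: (z == b); rewrite /= ?mulr1 !mulr0 ?add0r ?addr0.
Qed.

Lemma Grow_b z : Gmx b z = - gs * (z == a)%:R + gc * (z == b)%:R.
Proof.
rewrite mxE; have [->|za] := eqVneq z a.
  by rewrite !eqxx (negPf hba) (negPf hab) /= mulr1 mulr0 addr0.
rewrite eqxx orbT (negPf hba) /= eq_sym.
by case: (z == b); rewrite /= ?mulr1n ?mulr0n ?mulr1 ?mulr0 ?add0r ?addr0.
Qed.

Lemma Grow_o x z : x != a -> x != b -> Gmx x z = (z == x)%:R.
Proof.
move=> xa xb; rewrite mxE (negPf xa) (negPf xb) /= eq_sym.
by case: (z == x).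
Qed.

Lemma conj_rC (t : R) : Num.conj (rC t) = rC t.
Proof. exact: conjc_real. Qed.

Lemma Greal y z : Num.conj (Gmx y z) = Gmx y z.
Proof.
rewrite mxE; repeat case: ifP => _. all: try rewrite ?rmorphN ?conj_rC.
all: first [done | by rewrite /rC ?rmorph1 ?rmorph0 | by congr (- _); apply: conj_rC].
Qed.

Lemma Gsum x (f : 'I_n -> C) : \sum_z Gmx x z * f z =
   if x == a then gc * f a + gs * f b else if x == b then - gs * f a + gc * f b else f x.
Proof.
have [->|xa] := eqVneq x a.
  under eq_bigr => z _ do rewrite Grow_a mulrDl -!mulrA.
  by rewrite big_split /= -!mulr_sumr !sum_delta.
have [->|xb] := eqVneq x b.
  under eq_bigr => z _ do rewrite Grow_b mulrDl -!mulrA.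
  by rewrite big_split /= -!mulr_sumr !sum_delta.
by under eq_bigr => z _ do rewrite Grow_o //; rewrite sum_delta.
Qed.

Lemma Gunit : unit_ok Gmx.
Proof.
rewrite /unit_ok; apply/matrixP => x y; rewrite mxE [RHS]mxE.
have cs' : gc * gc + gs * gs = 1.
  by rewrite /rC -!rmorphM -rmorphD -!expr2 cs rmorph1.
have key (f : 'I_n -> C) : \sum_z Gmx x z * f z =
   if x == a then gc * f a + gs * f b else if x == b then - gs * f a + gc * f b else f x.
  have [->|xa] := eqVneq x a.
    under eq_bigr => z _ do rewrite Grow_a mulrDl -!mulrA.
    by rewrite big_split /= -!mulr_sumr !sum_delta.
  have [->|xb] := eqVneq x b.
    under eq_bigr => z _ do rewrite Grow_b mulrDl -!mulrA.
    by rewrite big_split /= -!mulr_sumr !sum_delta.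
  by under eq_bigr => z _ do rewrite Grow_o //; rewrite sum_delta.
rewrite (key (fun z => (adjmx Gmx) z y)) !adj_entry !Greal.
have Gaa : Gmx a a = gc by rewrite Grow_a eqxx (negPf hab) mulr1 mulr0 addr0.
have Gab : Gmx a b = gs by rewrite Grow_a eqxx (negPf hba) mulr1 mulr0 add0r.
have Gba : Gmx b a = - gs by rewrite Grow_b eqxx (negPf hab) mulr1 mulr0 addr0.
have Gbb : Gmx b b = gc by rewrite Grow_b eqxx (negPf hba) mulr1 mulr0 add0r.
have [->|xa] := eqVneq x a.
  have [->|ya] := eqVneq y a; first by rewrite Gaa Gab.
  have [->|yb] := eqVneq y b; first by rewrite Gba Gbb /=; ring.
  by rewrite !Grow_o // ![_ == y]eq_sym (negPf ya) (negPf yb) /= ?mulr0n ?mulr0 ?addr0.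
have [->|xb] := eqVneq x b.
  have [->|ya] := eqVneq y a; first by rewrite Gaa Gab (negPf hba) /=; ring.
  have [->|yb] := eqVneq y b; first by rewrite Gba Gbb /= mulrNN addrC.
  by rewrite !Grow_o // ![_ == y]eq_sym (negPf ya) (negPf yb) /= ?mulr0n ?mulr0 ?addr0.
have [->|ya] := eqVneq y a.
  by rewrite Grow_a (negPf xa) (negPf xb) /= ?mulr0n ?mulr0 ?addr0.
have [->|yb] := eqVneq y b.
  by rewrite Grow_b (negPf xa) (negPf xb) /= ?mulr0n ?mulr0 ?addr0.
by rewrite Grow_o // eq_sym.
Qed.

Lemma Gaa : Gmx a a = gc.
Proof. by rewrite Grow_a eqxx (negPf hab) mulr1 mulr0 addr0. Qed.
Lemma Gab : Gmx a b = gs.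
Proof. by rewrite Grow_a eqxx (negPf hba) mulr1 mulr0 add0r. Qed.

Lemma tr_diag_r (X : 'M[C]_n) (p : 'rV[C]_n) : \tr (X *m diag_mx p) = \sum_l X l l * p 0 l.
Proof. by rewrite mul_mx_diag /mxtrace; apply: eq_bigr => l _; rewrite mxE. Qed.

Lemma pid_diag k : (pid_mx k : 'M[C]_n) = diag_mx (\row_j ((j < k)%N)%:R).
Proof.
apply/matrixP => i j; rewrite !mxE; have [->|ij] := eqVneq i j; first by rewrite eqxx.
have : (i : nat) != j by [].
by move/negPf => ->.
Qed.

Lemma Gtrace (d : 'rV[C]_n) k : (a < k)%N -> (k <= b)%N ->
  \tr (Gmx *m diag_mx d *m adjmx Gmx *m pid_mx k) =
  \tr (diag_mx d *m pid_mx k) - d 0 a + gc * gc * d 0 a + gs * gs * d 0 b.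
Proof.
move=> ak kb; rewrite pid_diag !tr_diag_r.
have Xll l : (Gmx *m diag_mx d *m adjmx Gmx) l l =
    if l == a then gc * gc * d 0 a + gs * gs * d 0 b
    else if l == b then gs * gs * d 0 a + gc * gc * d 0 b else d 0 l.
  rewrite mxE (eq_bigr (fun z => Gmx l z * (d 0 z * Gmx l z))); last first.
    by move=> z _; rewrite adj_entry Greal mul_mx_diag mxE mulrA.
  rewrite Gsum; have [->|la] := eqVneq l a; first by rewrite Gaa Gab; ring.
  have [->|lb] := eqVneq l b.
    rewrite Grow_b eqxx (negPf hab) Grow_b eqxx (negPf hba) /=; ring.
  by rewrite Grow_o // eqxx mulr1.
set p := \row_j _.
pose Y (l : 'I_n) := if l == a then gc * gc * d 0 a + gs * gs * d 0 b
    else if l == b then gs * gs * d 0 a + gc * gc * d 0 b else d 0 l.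
rewrite (eq_bigr (fun l => Y l * p 0 l)); last by move=> l _; rewrite Xll.
have pa : p 0 a = 1 by rewrite mxE ak.
have pb : p 0 b = 0 by rewrite mxE ltnNge kb.
have -> : \sum_l diag_mx d l l * p 0 l = \sum_l d 0 l * p 0 l.
  by apply: eq_bigr => l _; rewrite mxE eqxx mulr1n.
have -> : \sum_l Y l * p 0 l = \sum_l d 0 l * p 0 l + \sum_l (Y l - d 0 l) * p 0 l.
  by rewrite -big_split; apply: eq_bigr => l _ /=; ring.
rewrite [\sum_l (Y l - d 0 l) * p 0 l](bigD1 a) //=.
rewrite [\sum_(i < n | i != a) _]big1 => [|l la]; last first.
  rewrite /Y (negPf la); have [->|lb] := eqVneq l b; first by rewrite pb mulr0.
  by rewrite subrr mul0r.
rewrite /Y eqxx pa; ring.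
Qed.

End Rot.


Section Final.
Variable R : realType.
Local Notation C := R[i].
Local Notation nc := (@ComplexField.Normc.normc R).
Variables n k : nat.
Hypothesis k1 : (1 <= k)%N.
Hypothesis kn : (k < n)%N.
Implicit Types A B M D P Q E F U V G : 'M[C]_n.

Lemma spectral_herm A : herm_mx A -> exists V (d : 'rV[C]_n),
  [/\ unit_ok V, (forall j, d 0 j = rC (complex.Re (d 0 j))) &
      A = adjmx V *m diag_mx d *m V].
Proof.
move=> hA.
have hs : A \is hermsymmx.
  by apply/is_hermitianmxP; rewrite /= expr0 scale1r -adjE hA.
have /orthomx_spectralP eA := hermitian_normalmx hs.
have uV := spectral_unitarymx A.
exists (spectralmx A), (spectral_diag A); split.
- exact/unit_okE.
- move=> j; have /mxOverP/(_ 0 j) := hermitian_spectral_diag_real hs.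
  by move/RRe_real.
- by rewrite [LHS]eA (invmx_unitary uV) adjE.
Qed.


Lemma trAPU A V (d : 'rV[C]_n) W : unit_ok V ->
  A = adjmx V *m diag_mx d *m V ->
  \tr (A *m PU k (W *m V)) = \tr (W *m diag_mx d *m adjmx W *m pid_mx k).
Proof.
move=> hV ->; rewrite /PU adjM.
set D := diag_mx d.
rewrite !mulmxA -(mulmxA (adjmx V *m D) V (adjmx V)) hV mulmx1.
rewrite mxtrace_mulC !mulmxA hV mul1mx.
by rewrite mxtrace_mulC !mulmxA.
Qed.



Lemma real_eq (x y z c s t : R) :
  (x%:C)%C - (y%:C)%C + rC c * rC c * (y%:C)%C + rC s * rC s * (z%:C)%C = (t%:C)%C ->
  t = x - y + c * c * y + s * s * z.
Proof.
move=> h; apply: (@complexI R); rewrite -h /rC.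
by rewrite !(rmorphD, rmorphN, rmorphM).
Qed.

Lemma abs_cases (t w : R) : `|t| = w -> t = w \/ t = - w.
Proof. by case: (ler0P t) => h <-; [right; rewrite opprK | left]. Qed.

Lemma c_to_a A : herm_mx A ->
  (forall P, rank_proj k P -> kparallel k A P) ->
  exists g : R, A = (rC g)%:M.
Proof.
move=> hA hc.
have kn' : (k <= n)%N by apply: ltnW.
have [V [d [hV hd eA]]] := spectral_herm hA.
set w := wk k A.
set T := \tr (diag_mx d *m pid_mx k).
have inst (a b : 'I_n) (c s : R) : a != b -> (a < k)%N -> (k <= b)%N -> c ^+ 2 + s ^+ 2 = 1 ->
    exists t : R, T - d 0 a + rC c * rC c * d 0 a + rC s * rC s * d 0 b = (t%:C)%C /\ `|t| = w.
  move=> hab ak kb cs.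
  have hU := unit_mul (Gunit hab cs) hV.
  have hP := PU_trk kn' hU.
  have hr := PU_rank kn' hU.
  have hw := key_close k1 kn' hA hP (hc _ hr).
  have aP : adjmx (PU k (Gmx a b c s *m V)) = PU k (Gmx a b c s *m V) by case: hP.
  have ht := tr_herm hA aP.
  exists (complex.Re (\tr (A *m PU k (Gmx a b c s *m V)))); split.
    by rewrite -(Gtrace c s hab d ak kb) -(trAPU _ hV eA).
  by rewrite -nc_real -ht hw.
have eq_ab (a b : 'I_n) : (a < k)%N -> (k <= b)%N -> d 0 a = d 0 b.
  move=> ak kb.
  have hab : a != b.
    apply/eqP => e; move: ak; rewrite e ltnNge kb //.
  have [t1 [e1 n1]] := inst a b 1 0 hab ak kb (ltac:(by rewrite expr1n expr0n addr0)).
  have eT : T = (t1%:C)%C.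
    by rewrite -e1 /rC rmorph1 rmorph0 !mul1r !mul0r addr0 subrK.
  have [t2 [e2 n2]] := inst a b 0 1 hab ak kb (ltac:(by rewrite expr1n expr0n add0r)).
  set h : R := Num.sqrt (2^-1).
  have hh : h * h = 2^-1.
    by rewrite -expr2 sqr_sqrtr // invr_ge0 ler0n.
  have [t3 [e3 n3]] := inst a b h h hab ak kb (ltac:(by rewrite expr2 hh; lra)).
  rewrite eT (hd a) (hd b) /rC in e2 e3.
  move/real_eq: e2 => e2; move/real_eq: e3; rewrite hh => e3.
  rewrite (hd a) (hd b); congr rC.
  rewrite !mul0r !mul1r addr0 in e2.
  case/abs_cases: n1 => ?; case/abs_cases: n2 => ?; case/abs_cases: n3 => ?; lra.
set kk : 'I_n := Ordinal kn.
have n0 : (0 < n)%N by apply: leq_trans kn.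
set z0 : 'I_n := Ordinal n0.
have all_eq (i : 'I_n) : d 0 i = d 0 kk.
  case: (ltnP i k) => ik; first exact: eq_ab.
  by rewrite -(eq_ab z0 i) //; apply: eq_ab.
have eD : diag_mx d = (d 0 kk)%:M.
  by apply/matrixP => i j; rewrite !mxE all_eq.
exists (complex.Re (d 0 kk)); rewrite -hd eA eD mul_mx_scalar -scalemxAl unit_ok_l //.
by rewrite scalemx1.
Qed.

Theorem main_thm (A : 'M[C]_n) : herm_mx A ->
  ((exists gamma : R, A = (rC gamma)%:M) <->
     (forall B : 'M[C]_n, herm_mx B -> kparallel k A B)) /\
  ((forall B : 'M[C]_n, herm_mx B -> kparallel k A B) <->
     (forall P : 'M[C]_n, rank_proj k P -> kparallel k A P)).
Proof.
move=> hA; have kn' : (k <= n)%N by apply: ltnW.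
have ab : (exists gamma : R, A = (rC gamma)%:M) ->
    (forall B : 'M[C]_n, herm_mx B -> kparallel k A B).
  by move=> [g ->] B hB; apply: a_to_b.
have bc : (forall B : 'M[C]_n, herm_mx B -> kparallel k A B) ->
    (forall P : 'M[C]_n, rank_proj k P -> kparallel k A P).
  by move=> h P [aP _ _]; apply: h.
split; split => //.
- by move=> h; apply: c_to_a => //; apply: bc.
- by move=> h; apply: ab; apply: c_to_a.
Qed.


End Final.

Theorem mainTheorem13 (R : realType) (n k : nat) (A : 'M[R[i]]_n) :
  (1 <= k < n)%N -> herm_mx A ->
  ((exists gamma : R, A = (rC gamma)%:M) <->
     (forall B : 'M[R[i]]_n, herm_mx B -> kparallel k A B)) /\
  ((forall B : 'M[R[i]]_n, herm_mx B -> kparallel k A B) <->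
     (forall P : 'M[R[i]]_n, rank_proj k P -> kparallel k A P)).
Proof.
move=> /andP[k1 kn] hA; exact: (main_thm k1 kn hA).
Qed.
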